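(* For every $\mu\in\mathcal M_0(\mathbb Z)$ there exists $\mathbf r_\mu\in[0,1]^{\mathbb Z}$ such that the randomized Markovian stopping time $\tau(\mathbf r_\mu)$ solves the Skorokhod embedding problem in the filtration $\mathbb F^{S,\boldsymbol\xi}$: that is, $\tau(\mathbf r_\mu)<\infty$ a.s., $S_{\tau(\mathbf r_\mu)}\sim\mu$, and the stopped process $(S_{t\wedge\tau(\mathbf r_\mu)})_{t\ge0}$ is uniformly integrable.
   Context: Time is discrete, $t\in\{0,1,2,\dots\}$. $S=(S_t)_{t\ge0}$ is a simple symmetric random walk on $\mathbb Z$ with $S_0=0$. $\mathcal M_0(\mathbb Z)$ denotes the set of probability measures on $\mathbb Z$ with finite first moment and mean zero. A stopping time $\tau$ is called uniformly integrable (UI) if the stopped process $(S_{t\wedge\tau})_{t\ge0}$ is uniformly integrable. For a filtration $\mathbb F$ (with respect to which $S$ is adapted and $S_{t+1}-S_t$ is independent of $\mathcal F_t$), $\mathrm{SEP}(\mathbb F,\mu)$ denotes the set of $\mathbb F$-stopping times $\tau$ with $S_\tau\sim\mu$ and $\tau$ UI. Randomized Markovian stopping times: for $\mathbf r=(r_x)_{x\in\mathbb Z}\in[0,1]^{\mathbb Z}$, let $\boldsymbol\xi=\{\xi_{t,x}\}_{t\ge0,x\in\mathbb Z}$ be Bernoulli random variables, mutually independent and independent of $S$, with $\mathbb P(\xi_{t,x}=0)=r_x=1-\mathbb P(\xi_{t,x}=1)$, and set $\tau(\mathbf r):=\inf\{t\ge0:\xi_{t,S_t}=0\}$. This is a stopping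 time for the filtration $\mathbb F^{S,\boldsymbol\xi}=(\mathcal F^{S,\boldsymbol\xi}_t)_{t\ge 0}$, $\mathcal F^{S,\boldsymbol\xi}_t:=\sigma(S_u,\xi_{u,S_u}:u\le t)$. The law of $S_{\tau(\mathbf r)}$ depends only on $\mathbf r$. *)

(* Defs.v *)
From Stdlib Require Import Reals ZArith.
Open Scope R_scope.

(* Symmetric partial sum  sum_{k=-N}^{N} f k  over Z. *)
Definition zpart (f : Z -> R) (N : nat) : R :=
  sum_f_R0 (fun i => f (Z.of_nat i - Z.of_nat N)%Z) (2 * N).

(* sum over Z of f equals l (symmetric partial sums converge to l) *)
Definition zsum_cv (f : Z -> R) (l : R) : Prop := Un_cv (zpart f) l.

(* mu is in M_0(Z): a probability measure on Z (given by its mass function)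
   with finite first moment and mean zero. *)
Definition M0 (mu : Z -> R) : Prop :=
  (forall y, 0 <= mu y) /\ zsum_cv mu 1 /\
  (exists m, zsum_cv (fun y => Rabs (IZR y) * mu y) m) /\
  zsum_cv (fun y => IZR y * mu y) 0.

(* For r in [0,1]^Z, tau(r) = inf{t : xi_{t,S_t} = 0}, where at time t in
   state x one stops with probability r_x (independently of everything),
   and otherwise S moves by +-1 with probability 1/2 each.
   alive r n x = P(tau >= n, S_n = x)  (= P(tau > n-1, S_n = x)). *)
Fixpoint alive (r : Z -> R) (n : nat) (x : Z) : R :=
  match n with
  | O => if Z.eq_dec x 0 then 1 else 0
  | S m => (1 - r (x - 1)%Z) * alive r m (x - 1)%Z / 2
         + (1 - r (x + 1)%Z) * alive r m (x + 1)%Z / 2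
  end.

(* P(tau = n, S_n = x) *)
Definition stop_at (r : Z -> R) (n : nat) (x : Z) : R := alive r n x * r x.

(* P(tau >= n) = sum_x alive r n x; alive r n is supported in [-n, n]. *)
Definition tail (r : Z -> R) (n : nat) : R := zpart (alive r n) n.

(* tau(r) < infinity almost surely:  P(tau >= n) -> 0 *)
Definition finite_as (r : Z -> R) : Prop := Un_cv (tail r) 0.

(* P(S_tau = y, tau < infinity) = sum_n P(tau = n, S_n = y) = p *)
Definition law_Stau (r : Z -> R) (y : Z) (p : R) : Prop :=
  Un_cv (fun N => sum_f_R0 (fun n => stop_at r n y) N) p.

(* Law of S_{t /\ tau}: P(S_{t/\tau} = x)
   = sum_{n<=t} P(tau = n, S_n = x) + P(tau > t, S_t = x). *)
Definition law_stopped (r : Z -> R) (t : nat) (x : Z) : R :=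
  sum_f_R0 (fun n => stop_at r n x) t + alive r t x * (1 - r x).

(* E[ |S_{t/\tau}| ; |S_{t/\tau}| >= K ]  (support of S_{t/\tau} is in [-t,t]) *)
Definition ui_tail (r : Z -> R) (t : nat) (K : R) : R :=
  zpart (fun x => if Rle_dec K (Rabs (IZR x))
                  then Rabs (IZR x) * law_stopped r t x else 0) t.

(* (S_{t /\ tau})_{t >= 0} is uniformly integrable:
   lim_{K -> oo} sup_t E[|S_{t/\tau}|; |S_{t/\tau}| >= K] = 0 *)
Definition UI_stopped (r : Z -> R) : Prop :=
  forall eps, eps > 0 -> exists K, forall t, ui_tail r t K <= eps.

(* Main.v *)
Require Import Defs.
From Stdlib Require Import Reals ZArith Lia Lra.
Open Scope R_scope.

Lemma sum_shift1 (A : nat -> R) n :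
  sum_f_R0 (fun i => A (S i)) n = sum_f_R0 A (S n) - A 0%nat.
Proof. rewrite (decomp_sum A (S n)) by lia. simpl pred. ring. Qed.

Lemma zpart_ext f g N : (forall y, (- Z.of_nat N <= y <= Z.of_nat N)%Z -> f y = g y) ->
  zpart f N = zpart g N.
Proof. intros H; unfold zpart; apply sum_eq; intros i Hi; apply H; lia. Qed.

Lemma zpart_le f g N : (forall y, (- Z.of_nat N <= y <= Z.of_nat N)%Z -> f y <= g y) ->
  zpart f N <= zpart g N.
Proof. intros H; unfold zpart; apply sum_Rle; intros i Hi; apply H; lia. Qed.

Lemma zpart_plus f g N : zpart (fun y => f y + g y) N = zpart f N + zpart g N.
Proof. unfold zpart; apply sum_plus. Qed.
Lemma zpart_minus f g N : zpart (fun y => f y - g y) N = zpart f N - zpart g N.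
Proof. unfold zpart; apply minus_sum. Qed.
Lemma zpart_scal c f N : zpart (fun y => c * f y) N = c * zpart f N.
Proof. unfold zpart; rewrite scal_sum; apply sum_eq; intros; ring. Qed.
Lemma zpart_zero N : zpart (fun _ => 0) N = 0.
Proof. unfold zpart; apply sum_eq_R0; auto. Qed.
Lemma zpart_nonneg f N : (forall y, 0 <= f y) -> 0 <= zpart f N.
Proof. intros H; unfold zpart; apply cond_pos_sum; auto. Qed.

Lemma zpart_S f N : zpart f (S N) = zpart f N + f (- (Z.of_nat N + 1))%Z + f (Z.of_nat N + 1)%Z.
Proof.
  unfold zpart. replace (2 * S N)%nat with (S (S (2 * N))) by lia.
  rewrite tech5. rewrite (decomp_sum _ (S (2*N))) by lia. simpl pred.
  rewrite (sum_eq _ (fun i => f (Z.of_nat i - Z.of_nat N)%Z)).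
  2:{ intros i _. f_equal. lia. }
  replace (Z.of_nat 0 - Z.of_nat (S N))%Z with (- (Z.of_nat N + 1))%Z by lia.
  replace (Z.of_nat (S (S (2 * N))) - Z.of_nat (S N))%Z with (Z.of_nat N + 1)%Z by lia.
  replace (N + (N + 0))%nat with (2 * N)%nat by lia. ring.
Qed.

Lemma zpart_shift_p F N :
  zpart (fun y => F (y + 1)%Z) N = zpart F N - F (- Z.of_nat N)%Z + F (Z.of_nat N + 1)%Z.
Proof.
  unfold zpart.
  rewrite (sum_eq _ (fun i => (fun j => F (Z.of_nat j - Z.of_nat N)%Z) (S i))).
  2:{ intros i _. cbv beta. f_equal. lia. }
  rewrite (sum_shift1 (fun j => F (Z.of_nat j - Z.of_nat N)%Z)), tech5.
  replace (Z.of_nat 0 - Z.of_nat N)%Z with (- Z.of_nat N)%Z by lia.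
  replace (Z.of_nat (S (2 * N)) - Z.of_nat N)%Z with (Z.of_nat N + 1)%Z by lia.
  ring.
Qed.

Lemma zpart_shift_m F N :
  zpart (fun y => F (y - 1)%Z) N = zpart F N - F (Z.of_nat N)%Z + F (- Z.of_nat N - 1)%Z.
Proof.
  pose proof (zpart_shift_p (fun y => F (y - 1)%Z) N) as H.
  rewrite (zpart_ext (fun y => F (y + 1 - 1)%Z) F) in H by (intros; f_equal; lia).
  replace (Z.of_nat N + 1 - 1)%Z with (Z.of_nat N) in H by lia.
  lra.
Qed.

Lemma zpart_support f N M : (forall y, (Z.of_nat N < Z.abs y)%Z -> f y = 0) -> (N <= M)%nat ->
  zpart f M = zpart f N.
Proof.
  intros H HM. induction HM; auto.
  rewrite zpart_S, IHHM, !H by lia. ring.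
Qed.

Lemma zpart_mono f N M : (forall y, 0 <= f y) -> (N <= M)%nat -> zpart f N <= zpart f M.
Proof.
  intros H HM. induction HM; try lra.
  rewrite zpart_S. pose proof (H (- (Z.of_nat m + 1))%Z). pose proof (H (Z.of_nat m + 1)%Z). lra.
Qed.

Definition zind (y z : Z) : R := if Z.eq_dec y z then 1 else 0.

Lemma zpart_delta f z N : (Z.abs z <= Z.of_nat N)%Z ->
  zpart (fun y => f y * zind y z) N = f z.
Proof.
  induction N; intros Hz.
  - unfold zpart; simpl. unfold zind. destruct (Z.eq_dec (0 - 0) z); [subst; simpl; ring | lia].
  - destruct (Z.eq_dec (Z.abs z) (Z.of_nat (S N))) as [He|He].
    + rewrite zpart_S.
      rewrite (zpart_ext _ (fun _ => 0)).
      2:{ intros y Hy. unfold zind. destruct (Z.eq_dec y z); [lia|ring]. }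
      rewrite zpart_zero. unfold zind.
      destruct (Z.eq_dec (- (Z.of_nat N + 1)) z); destruct (Z.eq_dec (Z.of_nat N + 1) z); subst;
        try lia; try ring.
    + rewrite zpart_S, IHN by lia. unfold zind.
      destruct (Z.eq_dec (- (Z.of_nat N + 1)) z); destruct (Z.eq_dec (Z.of_nat N + 1) z);
        try lia; ring.
Qed.

Lemma zpart_delta_out f z N : (Z.of_nat N < Z.abs z)%Z ->
  zpart (fun y => f y * zind y z) N = 0.
Proof.
  intros H. rewrite (zpart_ext _ (fun _ => 0)). apply zpart_zero.
  intros y Hy. unfold zind. destruct (Z.eq_dec y z); [lia|ring].
Qed.

Lemma zpart_single_le f z N : (forall y, 0 <= f y) -> (Z.abs z <= Z.of_nat N)%Z ->
  f z <= zpart f N.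
Proof.
  intros H Hz. rewrite <- (zpart_delta f z N Hz). apply zpart_le.
  intros y _. unfold zind. destruct (Z.eq_dec y z); pose proof (H y); lra.
Qed.

Lemma abs_conv (k : Z) : (Rabs (IZR k - 1) + Rabs (IZR k + 1)) / 2 = Rabs (IZR k) + zind k 0.
Proof.
  unfold zind. destruct (Z.eq_dec k 0) as [->|Hk].
  - rewrite (Rabs_left (IZR 0 - 1)) by lra. rewrite (Rabs_right (IZR 0 + 1)) by lra.
    rewrite Rabs_R0. destruct (Z.eq_dec 0 0); [lra|lia].
  - destruct (Z_lt_le_dec k 0) as [Hl|Hl].
    + assert (IZR k <= -1) by (apply IZR_le; lia).
      rewrite (Rabs_left (IZR k - 1)) by lra. rewrite (Rabs_left1 (IZR k + 1)) by lra.
      rewrite (Rabs_left (IZR k)) by lra. lra.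
    + assert (1 <= IZR k) by (apply IZR_le; lia).
      rewrite (Rabs_right (IZR k - 1)) by lra. rewrite (Rabs_right (IZR k + 1)) by lra.
      rewrite (Rabs_right (IZR k)) by lra. lra.
Qed.

Definition rok (r : Z -> R) := forall x, 0 <= r x <= 1.

Lemma alive0 r x : alive r 0 x = zind x 0.
Proof. reflexivity. Qed.

Lemma aliveS r n x : alive r (S n) x =
  (1 - r (x - 1)%Z) * alive r n (x - 1)%Z / 2 + (1 - r (x + 1)%Z) * alive r n (x + 1)%Z / 2.
Proof. reflexivity. Qed.

Lemma alive_nonneg r : rok r -> forall n x, 0 <= alive r n x.
Proof.
  intros Hr n; induction n; intros x.
  - rewrite alive0; unfold zind; destruct (Z.eq_dec x 0); lra.
  - rewrite aliveS. pose proof (Hr (x-1)%Z); pose proof (Hr (x+1)%Z).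
    pose proof (IHn (x-1)%Z); pose proof (IHn (x+1)%Z).
    assert (0 <= (1 - r (x - 1)%Z) * alive r n (x - 1)%Z) by (apply Rmult_le_pos; lra).
    assert (0 <= (1 - r (x + 1)%Z) * alive r n (x + 1)%Z) by (apply Rmult_le_pos; lra).
    lra.
Qed.

Lemma alive_supp r n x : (Z.of_nat n < Z.abs x)%Z -> alive r n x = 0.
Proof.
  revert x; induction n; intros x H.
  - rewrite alive0; unfold zind; destruct (Z.eq_dec x 0); [lia|ring].
  - rewrite aliveS, !IHn by lia. lra.
Qed.

Definition bt r t y := (1 - r y) * alive r t y.

Lemma bt_supp r t y : (Z.of_nat t < Z.abs y)%Z -> bt r t y = 0.
Proof. intros; unfold bt; rewrite alive_supp by auto; ring. Qed.

Lemma stop_sum_supp r t y : (Z.of_nat t < Z.abs y)%Z ->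
  sum_f_R0 (fun n => stop_at r n y) t = 0.
Proof. intros H; apply sum_eq_R0; intros n Hn; unfold stop_at; rewrite alive_supp by lia; ring. Qed.

Lemma ls_supp r t y : (Z.of_nat t < Z.abs y)%Z -> law_stopped r t y = 0.
Proof. intros H; unfold law_stopped; rewrite stop_sum_supp, alive_supp by auto; ring. Qed.

Lemma ls_nonneg r : rok r -> forall t y, 0 <= law_stopped r t y.
Proof.
  intros Hr t y; unfold law_stopped.
  pose proof (Hr y). pose proof (alive_nonneg r Hr t y).
  assert (0 <= sum_f_R0 (fun n => stop_at r n y) t).
  { apply cond_pos_sum; intros n; unfold stop_at; apply Rmult_le_pos; [apply alive_nonneg; auto|lra]. }
  assert (0 <= alive r t y * (1 - r y)) by (apply Rmult_le_pos; lra). lra.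
Qed.

Lemma alive_le_ls r : rok r -> forall t y, alive r t y <= law_stopped r t y.
Proof.
  intros Hr t y; unfold law_stopped. destruct t.
  - simpl sum_f_R0. unfold stop_at. right; ring.
  - rewrite tech5. unfold stop_at.
    assert (0 <= sum_f_R0 (fun n => alive r n y * r y) t).
    { apply cond_pos_sum; intros n; apply Rmult_le_pos; [apply alive_nonneg; auto|apply Hr]. }
    lra.
Qed.

Lemma ls_step r t y : law_stopped r (S t) y =
  law_stopped r t y - bt r t y + (bt r t (y - 1)%Z + bt r t (y + 1)%Z) / 2.
Proof.
  unfold law_stopped, bt. rewrite tech5, aliveS. unfold stop_at. rewrite aliveS. field.
Qed.

Definition W r t (phi : Z -> R) := zpart (fun y => law_stopped r t y * phi y) t.

Lemma W_step r t phi : W r (S t) phi =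
  W r t phi + zpart (fun y => bt r t y * ((phi (y - 1)%Z + phi (y + 1)%Z) / 2 - phi y)) (S t).
Proof.
  set (b := bt r t).
  set (F1 := fun y => b y * phi (y + 1)%Z).
  set (F2 := fun y => b y * phi (y - 1)%Z).
  assert (E1 : W r (S t) phi = zpart (fun y => law_stopped r t y * phi y) (S t)
     - zpart (fun y => b y * phi y) (S t)
     + / 2 * zpart (fun y => F1 (y - 1)%Z) (S t) + / 2 * zpart (fun y => F2 (y + 1)%Z) (S t)).
  { unfold W. rewrite <- !zpart_scal, <- zpart_minus, <- !zpart_plus. apply zpart_ext.
    intros y _. rewrite ls_step. unfold F1, F2, b.
    replace (y - 1 + 1)%Z with y by lia. replace (y + 1 - 1)%Z with y by lia. field. }
  assert (E2 : zpart (fun y => b y * ((phi (y - 1)%Z + phi (y + 1)%Z) / 2 - phi y)) (S t) =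
     / 2 * zpart F2 (S t) + / 2 * zpart F1 (S t) - zpart (fun y => b y * phi y) (S t)).
  { rewrite <- !zpart_scal, <- zpart_plus, <- zpart_minus. apply zpart_ext.
    intros y _. unfold F1, F2. field. }
  rewrite E1, E2, zpart_shift_m, zpart_shift_p.
  unfold F1, F2, b. rewrite !bt_supp by lia.
  rewrite (zpart_support (fun y => law_stopped r t y * phi y) t (S t)); [unfold W; ring| |lia].
  intros y Hy; rewrite ls_supp by auto; ring.
Qed.

Lemma ls0 r : law_stopped r 0 0 = 1.
Proof. unfold law_stopped, stop_at. simpl sum_f_R0. rewrite alive0. unfold zind.
  destruct (Z.eq_dec 0 0); [ring|lia]. Qed.

Lemma W_mass r t : W r t (fun _ => 1) = 1.
Proof.
  induction t.
  - unfold W, zpart. simpl. rewrite ls0. ring.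
  - rewrite W_step, IHt. rewrite (zpart_ext _ (fun _ => 0)) by (intros; field).
    rewrite zpart_zero; ring.
Qed.

Definition Gs r N x := sum_f_R0 (fun n => alive r n x) N.

Lemma Gs_S r N x : Gs r (S N) x = zind x 0 +
  (1 - r (x - 1)%Z) * Gs r N (x - 1)%Z / 2 + (1 - r (x + 1)%Z) * Gs r N (x + 1)%Z / 2.
Proof.
  induction N.
  - unfold Gs. rewrite tech5. cbn [sum_f_R0]. rewrite alive0, aliveS. field.
  - unfold Gs in *. rewrite (tech5 (fun n => alive r n x)), IHN,
      (tech5 (fun n => alive r n (x-1)%Z)), (tech5 (fun n => alive r n (x+1)%Z)),
      (aliveS r (S N) x). field.
Qed.

Definition phiz (z : Z) := fun y => Rabs (IZR y - IZR z).

Lemma phiz_lap z y : (phiz z (y - 1)%Z + phiz z (y + 1)%Z) / 2 - phiz z y = zind y z.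
Proof.
  unfold phiz. rewrite minus_IZR, plus_IZR.
  replace (IZR y - 1 - IZR z) with (IZR (y - z) - 1) by (rewrite minus_IZR; ring).
  replace (IZR y + 1 - IZR z) with (IZR (y - z) + 1) by (rewrite minus_IZR; ring).
  replace (IZR y - IZR z) with (IZR (y - z)) by (rewrite minus_IZR; ring).
  rewrite abs_conv. unfold zind. destruct (Z.eq_dec (y - z) 0); destruct (Z.eq_dec y z); try lia; ring.
Qed.

Lemma W_pot r z t : W r t (phiz z) + (1 - r z) * alive r t z = Rabs (IZR z) + (1 - r z) * Gs r t z.
Proof.
  induction t.
  - unfold W, zpart, Gs. simpl. rewrite ls0. unfold phiz. simpl.
    replace (0 - IZR z) with (- IZR z) by ring. rewrite Rabs_Ropp. ring.
  - rewrite W_step.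
    rewrite (zpart_ext _ (fun y => bt r t y * zind y z)) by (intros; rewrite phiz_lap; ring).
    assert (Hd : zpart (fun y => bt r t y * zind y z) (S t) = bt r t z).
    { destruct (Z_le_gt_dec (Z.abs z) (Z.of_nat (S t))).
      - apply zpart_delta; auto.
      - rewrite zpart_delta_out, bt_supp by lia. ring. }
    rewrite Hd. unfold Gs in *. rewrite tech5. unfold bt. lra.
Qed.

Definition uu (U : Z -> R) z := U z - Rabs (IZR z).
Definition gg (mu U : Z -> R) z := uu U z + mu z.
Definition rr (mu U : Z -> R) z := if Rle_dec (gg mu U z) 0 then 1 else mu z / gg mu U z.

Lemma Un_cv_ext u v l : (forall n, u n = v n) -> Un_cv u l -> Un_cv v l.
Proof. intros H Hu eps He. destruct (Hu eps He) as [N HN]. exists N; intros n Hn.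
  rewrite <- H; auto. Qed.

Lemma sum_mono (a : nat -> R) n m : (forall k, 0 <= a k) -> (n <= m)%nat -> sum_f_R0 a n <= sum_f_R0 a m.
Proof. intros H Hm; induction Hm; [lra|]. rewrite tech5. pose proof (H (S m)). lra. Qed.

Lemma terms_to0 (a : nat -> R) B : (forall n, 0 <= a n) -> (forall N, sum_f_R0 a N <= B) -> Un_cv a 0.
Proof.
  intros Ha HB.
  assert (Hg : Un_growing (fun N => sum_f_R0 a N)).
  { intros n; rewrite tech5; pose proof (Ha (S n)); lra. }
  assert (Hb : has_ub (fun N => sum_f_R0 a N)).
  { exists B; intros x [n ->]; auto. }
  destruct (growing_cv _ Hg Hb) as [l Hl].
  intros eps He. destruct (Hl (eps/2)) as [N HN]; [lra|].
  exists (S N); intros n Hn. destruct n; [lia|].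
  unfold R_dist in *. pose proof (HN (S n) ltac:(lia)). pose proof (HN n ltac:(lia)).
  rewrite tech5 in H. rewrite Rminus_0_r.
  apply Rabs_def2 in H; apply Rabs_def2 in H0. apply Rabs_def1; lra.
Qed.

Lemma abs_K_facts a K : 0 <= K ->
  2 * K <= Rabs (Rabs a - 0) + 0 -> Rabs a <= Rabs (a - K) + Rabs (a + K) - 2 * K.
Proof. intros HK. unfold Rabs; repeat destruct Rcase_abs; lra. Qed.

Lemma abs_K_pos a K : 0 <= K -> 0 <= Rabs (a - K) + Rabs (a + K) - 2 * K.
Proof. intros HK. unfold Rabs; repeat destruct Rcase_abs; lra. Qed.


Lemma main_r (mu U : Z -> R)
  (Hmu : forall y, 0 <= mu y)
  (HU1 : forall z, Rabs (IZR z) <= U z)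
  (HU2 : forall x, (U (x - 1)%Z + U (x + 1)%Z) / 2 = U x + mu x)
  (Hmass : forall N, zpart mu N <= 1)
  (HUI : forall eps, eps > 0 -> exists K : nat,
            U (Z.of_nat K) + U (- Z.of_nat K)%Z - 2 * INR K <= eps) :
  exists r : Z -> R,
    (forall x, 0 <= r x <= 1) /\
    finite_as r /\
    (forall y, law_Stau r y (mu y)) /\
    UI_stopped r.
Proof.
  set (r := rr mu U).
  assert (Hu : forall z, 0 <= uu U z) by (intros z; unfold uu; pose proof (HU1 z); lra).
  assert (Hr : rok r).
  { intros z. unfold r, rr. destruct (Rle_dec (gg mu U z) 0) as [H|H]; [lra|].
    pose proof (Hu z). pose proof (Hmu z). unfold gg in *. split.
    - apply Rmult_le_pos; [lra|]. left; apply Rinv_0_lt_compat; lra.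
    - apply Rmult_le_reg_r with (uu U z + mu z); [lra|].
      unfold Rdiv; rewrite Rmult_assoc, Rinv_l by lra. lra. }
  assert (Hg0 : forall z, gg mu U z <= 0 -> uu U z = 0 /\ mu z = 0).
  { intros z H. pose proof (Hu z). pose proof (Hmu z). unfold gg in H. lra. }
  assert (Hru : forall z, (1 - r z) * gg mu U z = uu U z).
  { intros z. unfold r, rr. destruct (Rle_dec (gg mu U z) 0) as [H|H].
    - destruct (Hg0 z H); unfold gg; rewrite H0, H1; ring.
    - unfold gg in *. field. lra. }
  assert (Hrm : forall z, r z * gg mu U z = mu z).
  { intros z. unfold r, rr. destruct (Rle_dec (gg mu U z) 0) as [H|H].
    - destruct (Hg0 z H); unfold gg; rewrite H0, H1; ring.
    - unfold gg in *. field. lra. }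
  assert (Hgeq : forall x, gg mu U x = zind x 0 + (uu U (x - 1)%Z + uu U (x + 1)%Z) / 2).
  { intros x. unfold gg, uu. pose proof (HU2 x). pose proof (abs_conv x).
    rewrite minus_IZR, plus_IZR. lra. }
  assert (HGs : forall N x, Gs r N x <= gg mu U x).
  { induction N; intros x.
    - unfold Gs; cbn [sum_f_R0]. rewrite alive0, Hgeq.
      pose proof (Hu (x-1)%Z); pose proof (Hu (x+1)%Z). lra.
    - rewrite Gs_S, Hgeq, <- (Hru (x-1)%Z), <- (Hru (x+1)%Z).
      pose proof (Hr (x-1)%Z); pose proof (Hr (x+1)%Z).
      pose proof (IHN (x-1)%Z); pose proof (IHN (x+1)%Z).
      assert ((1 - r (x - 1)%Z) * Gs r N (x - 1)%Z <= (1 - r (x - 1)%Z) * gg mu U (x - 1)%Z)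
        by (apply Rmult_le_compat_l; lra).
      assert ((1 - r (x + 1)%Z) * Gs r N (x + 1)%Z <= (1 - r (x + 1)%Z) * gg mu U (x + 1)%Z)
        by (apply Rmult_le_compat_l; lra).
      lra. }
  assert (Hanneg := alive_nonneg r Hr).
  assert (HWpot : forall t z, W r t (phiz z) <= U z).
  { intros t z. pose proof (W_pot r z t). pose proof (HGs t z). pose proof (Hr z).
    pose proof (Hanneg t z). pose proof (Hru z). unfold uu in *.
    assert ((1 - r z) * Gs r t z <= (1 - r z) * gg mu U z) by (apply Rmult_le_compat_l; lra).
    assert (0 <= (1 - r z) * alive r t z) by (apply Rmult_le_pos; lra). lra. }
  assert (Htail : forall t L, tail r t <= zpart (alive r t) L + U 0%Z / (INR L + 1)).
  { intros t L. unfold tail.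
    set (cut := fun y => if Z_le_dec (Z.abs y) (Z.of_nat L) then 1 else 0).
    assert (HL : 0 < INR L + 1) by (pose proof (pos_INR L); lra).
    apply Rle_trans with (zpart (fun y => alive r t y * cut y) t +
                          / (INR L + 1) * W r t (phiz 0)).
    { unfold W. rewrite <- zpart_scal, <- zpart_plus. apply zpart_le. intros y _.
      pose proof (Hanneg t y). pose proof (alive_le_ls r Hr t y). pose proof (ls_nonneg r Hr t y).
      assert (0 <= / (INR L + 1) * (law_stopped r t y * phiz 0 y)).
      { apply Rmult_le_pos; [left; apply Rinv_0_lt_compat; lra|].
        apply Rmult_le_pos; [lra|apply Rabs_pos]. }
      unfold cut. destruct (Z_le_dec (Z.abs y) (Z.of_nat L)); [lra|].
      assert (Hy : INR L + 1 <= phiz 0 y).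
      { unfold phiz. change (IZR 0) with 0. rewrite Rminus_0_r.
        rewrite <- abs_IZR. rewrite INR_IZR_INZ. rewrite <- plus_IZR. apply IZR_le. lia. }
      cut (law_stopped r t y * 1 <= / (INR L + 1) * (law_stopped r t y * phiz 0 y)); [lra|].
      replace (/ (INR L + 1) * (law_stopped r t y * phiz 0 y))
        with (law_stopped r t y * (phiz 0 y / (INR L + 1))) by (field; lra).
      apply Rmult_le_compat_l; [lra|].
      apply Rmult_le_reg_r with (INR L + 1); [lra|].
      unfold Rdiv; rewrite Rmult_assoc, Rinv_l by lra. lra. }
    assert (H1 : zpart (fun y => alive r t y * cut y) t <= zpart (alive r t) L).
    { apply Rle_trans with (zpart (fun y => alive r t y * cut y) (Nat.max t L)).
      { apply zpart_mono; [|lia]. intros y; unfold cut; destruct Z_le_dec;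
          pose proof (Hanneg t y); lra. }
      rewrite (zpart_support _ L); [|intros y Hy; unfold cut; destruct Z_le_dec; [lia|ring]|lia].
      apply zpart_le; intros y _; unfold cut; destruct Z_le_dec; pose proof (Hanneg t y); lra. }
    pose proof (HWpot t 0%Z).
    assert (/ (INR L + 1) * W r t (phiz 0) <= U 0%Z / (INR L + 1)).
    { unfold Rdiv; rewrite Rmult_comm. apply Rmult_le_compat_r; [left; apply Rinv_0_lt_compat|]; lra. }
    lra. }
  assert (Ha0 : forall x, Un_cv (fun t => alive r t x) 0).
  { intros x. apply terms_to0 with (gg mu U x); [intros; apply Hanneg | intros N; apply (HGs N x)]. }
  assert (HaL : forall L, Un_cv (fun t => zpart (alive r t) L) 0).
  { induction L.
    - apply Un_cv_ext with (fun t => alive r t 0%Z); [intros; unfold zpart; simpl; reflexivity|auto].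
    - apply Un_cv_ext with (fun t => zpart (alive r t) L + alive r t (- (Z.of_nat L + 1))%Z
                                      + alive r t (Z.of_nat L + 1)%Z).
      { intros; rewrite zpart_S; reflexivity. }
      replace 0 with (0 + 0 + 0) by ring. apply CV_plus; [apply CV_plus|]; auto. }
  assert (Hfin : finite_as r).
  { intros eps He.
    assert (HU0 : 0 <= U 0%Z) by (pose proof (HU1 0%Z); pose proof (Rabs_pos (IZR 0)); lra).
    destruct (INR_archimed (eps/2) (U 0%Z) ltac:(lra)) as [L HLa].
    destruct (HaL L (eps/2)) as [T HT]; [lra|].
    exists T; intros t Ht. unfold R_dist. rewrite Rminus_0_r.
    pose proof (HT t Ht) as H1. unfold R_dist in H1. rewrite Rminus_0_r in H1.
    apply Rabs_def2 in H1.
    pose proof (Htail t L).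
    assert (0 <= tail r t) by (unfold tail; apply zpart_nonneg; auto).
    assert (U 0%Z / (INR L + 1) < eps / 2).
    { pose proof (pos_INR L). apply Rmult_lt_reg_r with (INR L + 1); [lra|].
      unfold Rdiv; rewrite Rmult_assoc, Rinv_l by lra. nra. }
    rewrite Rabs_right by lra. lra. }
  exists r. split; [exact Hr|]. split; [exact Hfin|]. split.
  -
    intros y0.
    assert (Hsum : forall N, sum_f_R0 (fun n => stop_at r n y0) N = r y0 * Gs r N y0).
    { intros N; unfold stop_at, Gs; rewrite scal_sum; reflexivity. }
    assert (Hup : forall N, r y0 * Gs r N y0 <= mu y0).
    { intros N. rewrite <- Hrm. apply Rmult_le_compat_l; [apply Hr|auto]. }
    intros eps He.
    destruct (Hfin eps He) as [T HT].
    set (t := Nat.max T (Z.to_nat (Z.abs y0))).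
    assert (Htt : tail r t < eps).
    { pose proof (HT t ltac:(unfold t; lia)) as H. unfold R_dist in H. rewrite Rminus_0_r in H.
      apply Rabs_def2 in H. lra. }
    assert (Hkey : mu y0 - r y0 * Gs r t y0 < eps).
    { pose proof (W_mass r t) as HM. unfold W in HM.
      assert (E : zpart (fun y => law_stopped r t y * 1) t =
                  zpart (fun y => r y * Gs r t y) t + zpart (fun y => bt r t y) t).
      { rewrite <- zpart_plus. apply zpart_ext. intros y _. unfold law_stopped, bt, Gs, stop_at.
        rewrite scal_sum. ring. }
      assert (Hb : zpart (fun y => bt r t y) t <= tail r t).
      { unfold tail. apply zpart_le. intros y _. unfold bt. pose proof (Hr y). pose proof (Hanneg t y).
        nra. }
      assert (Hs : mu y0 - r y0 * Gs r t y0 <= zpart (fun y => mu y - r y * Gs r t y) t).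
      { apply (zpart_single_le (fun y => mu y - r y * Gs r t y)).
        - intros y. assert (r y * Gs r t y <= mu y); [|lra].
          rewrite <- Hrm. apply Rmult_le_compat_l; [apply Hr|auto].
        - unfold t. lia. }
      rewrite zpart_minus in Hs. pose proof (Hmass t). lra. }
    exists t. intros n Hn. unfold R_dist. rewrite Hsum.
    assert (Gs r t y0 <= Gs r n y0) by (apply sum_mono; auto; lia).
    assert (r y0 * Gs r t y0 <= r y0 * Gs r n y0) by (apply Rmult_le_compat_l; [apply Hr|auto]).
    pose proof (Hup n). rewrite Rabs_left1 by lra. lra.
  -
    intros eps He. destruct (HUI eps He) as [K HK].
    exists (2 * INR K). intros t.
    pose proof (pos_INR K) as HK0.
    apply Rle_trans with (W r t (phiz (Z.of_nat K)) + W r t (phiz (- Z.of_nat K)%Z)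
                          - 2 * INR K * W r t (fun _ => 1)).
    { unfold W, ui_tail. rewrite <- zpart_scal, <- zpart_plus, <- zpart_minus. apply zpart_le.
      intros y _. pose proof (ls_nonneg r Hr t y) as Hn.
      unfold phiz. rewrite opp_IZR, <- INR_IZR_INZ.
      replace (IZR y - - INR K) with (IZR y + INR K) by ring.
      destruct (Rle_dec (2 * INR K) (Rabs (IZR y))).
      - pose proof (abs_K_facts (IZR y) (INR K) HK0).
        assert (Rabs (IZR y) <= Rabs (IZR y - INR K) + Rabs (IZR y + INR K) - 2 * INR K).
        { apply H. rewrite Rminus_0_r, Rabs_Rabsolu. lra. }
        rewrite Rmult_comm. nra.
      - pose proof (abs_K_pos (IZR y) (INR K) HK0). nra. }
    rewrite W_mass. pose proof (HWpot t (Z.of_nat K)). pose proof (HWpot t (- Z.of_nat K)%Z). lra.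
Qed.

Lemma Un_cv_eventually u v l : (exists N0, forall n, (n >= N0)%nat -> u n = v n) ->
  Un_cv u l -> Un_cv v l.
Proof.
  intros [N0 H0] Hu eps He. destruct (Hu eps He) as [N HN]. exists (Nat.max N N0).
  intros n Hn. rewrite <- H0 by lia. apply HN; lia.
Qed.

Lemma cv_const c : Un_cv (fun _ => c) c.
Proof. intros eps He; exists 0%nat; intros; unfold R_dist; rewrite Rminus_diag, Rabs_R0; lra. Qed.

Lemma zpart_growing f : (forall y, 0 <= f y) -> Un_growing (zpart f).
Proof. intros H n; apply zpart_mono; auto. Qed.

Lemma abs_split a K : 0 <= K -> Rabs (a - K) + Rabs (a + K) - 2 * K <= 2 * Rabs a.
Proof. intros. unfold Rabs; repeat destruct Rcase_abs; lra. Qed.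

Lemma abs_small a K : Rabs a <= K -> Rabs (a - K) + Rabs (a + K) - 2 * K = 0.
Proof. intros. unfold Rabs in *; repeat destruct Rcase_abs; lra. Qed.

Lemma zpart_opp f N : zpart (fun y => - f y) N = - zpart f N.
Proof. rewrite <- (Rmult_1_l (zpart f N)), Ropp_mult_distr_l, <- zpart_scal.
  apply zpart_ext; intros; ring. Qed.

Theorem theorem1 (mu : Z -> R) :
  M0 mu ->
  exists r : Z -> R,
    (forall x, 0 <= r x <= 1) /\
    finite_as r /\
    (forall y, law_Stau r y (mu y)) /\
    UI_stopped r.
Proof.
  intros [Hmu [H1 [[m Hm] H0]]].
  unfold zsum_cv in *.
  assert (Hma : forall y, 0 <= Rabs (IZR y) * mu y) by (intros; apply Rmult_le_pos; [apply Rabs_pos|auto]).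
  assert (Hmle : forall N, zpart (fun y => Rabs (IZR y) * mu y) N <= m).
  { apply growing_ineq; auto. apply zpart_growing; auto. }
  assert (Hmass : forall N, zpart mu N <= 1).
  { apply growing_ineq; auto. apply zpart_growing; auto. }
  set (P := fun z N => zpart (fun y => mu y * Rabs (IZR y - IZR z)) N).
  assert (HP : forall z, {l | Un_cv (P z) l}).
  { intros z. apply growing_cv.
    - apply zpart_growing. intros y; apply Rmult_le_pos; [auto|apply Rabs_pos].
    - exists (m + Rabs (IZR z)). intros x [N ->]. unfold P.
      apply Rle_trans with (zpart (fun y => Rabs (IZR y) * mu y) N + Rabs (IZR z) * zpart mu N).
      + rewrite <- zpart_scal, <- zpart_plus. apply zpart_le. intros y _.
        pose proof (Rabs_triang (IZR y) (- IZR z)). rewrite Rabs_Ropp in H.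
        pose proof (Hmu y). unfold Rminus. nra.
      + pose proof (Hmle N); pose proof (Hmass N); pose proof (Rabs_pos (IZR z)). nra. }
  set (U := fun z => proj1_sig (HP z)).
  assert (HU : forall z, Un_cv (P z) (U z)) by (intros z; unfold U; destruct (HP z); auto).
  apply (main_r mu U); auto.
  -
    intros z.
    assert (Hlin : Un_cv (fun N => zpart (fun y => IZR y * mu y) N - IZR z * zpart mu N) (0 - IZR z * 1)).
    { apply CV_minus; auto. apply CV_mult; auto. apply cv_const. }
    assert (A1 : 0 - IZR z * 1 <= U z).
    { apply Rle_cv_lim with (Un := fun N => zpart (fun y => IZR y * mu y) N - IZR z * zpart mu N) (Vn := P z); auto.
      intros N. unfold P. rewrite <- zpart_scal, <- zpart_minus. apply zpart_le. intros y _.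
      pose proof (Hmu y). pose proof (Rle_abs (IZR y - IZR z)). nra. }
    assert (A2 : - (0 - IZR z * 1) <= U z).
    { apply Rle_cv_lim with (Un := fun N => - (zpart (fun y => IZR y * mu y) N - IZR z * zpart mu N)) (Vn := P z).
      - intros N. unfold P. rewrite <- zpart_scal, <- zpart_minus.
        rewrite <- zpart_opp.
        apply zpart_le. intros y _.
        pose proof (Hmu y). pose proof (Rle_abs (- (IZR y - IZR z))). rewrite Rabs_Ropp in H2. nra.
      - apply CV_opp; auto.
      - auto. }
    unfold Rabs; destruct Rcase_abs; lra.
  -
    intros x.
    assert (Hc : Un_cv (fun N => (P (x - 1)%Z N + P (x + 1)%Z N) / 2) ((U (x - 1)%Z + U (x + 1)%Z) / 2)).
    { unfold Rdiv. apply CV_mult; [apply CV_plus; auto|apply cv_const]. }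
    assert (Hd : Un_cv (fun N => (P (x - 1)%Z N + P (x + 1)%Z N) / 2) (U x + mu x)).
    { apply Un_cv_eventually with (fun N => P x N + mu x).
      - exists (Z.to_nat (Z.abs x)). intros n Hn. unfold P.
        rewrite <- (zpart_delta mu x n) by lia.
        rewrite <- zpart_plus, <- zpart_plus.
        unfold Rdiv. rewrite Rmult_comm, <- zpart_scal. apply zpart_ext. intros y _.
        pose proof (abs_conv (y - x)) as Ha.
        rewrite minus_IZR in Ha.
        replace (IZR y - IZR (x - 1)) with (IZR y - IZR x + 1) by (rewrite minus_IZR; ring).
        replace (IZR y - IZR (x + 1)) with (IZR y - IZR x - 1) by (rewrite plus_IZR; ring).
        replace (zind y x) with (zind (y - x) 0) by (unfold zind; destruct (Z.eq_dec (y - x) 0); destruct (Z.eq_dec y x); try lia; reflexivity).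
        rewrite <- Rmult_plus_distr_l, <- Ha. field.
      - apply CV_plus; [auto|apply cv_const]. }
    apply (UL_sequence _ _ _ Hc Hd).
  -
    intros eps He. destruct (Hm (eps / 2)) as [K HK]; [lra|].
    exists K.
    pose proof (pos_INR K) as HK0.
    set (h := fun y => mu y * (Rabs (IZR y - INR K) + Rabs (IZR y + INR K) - 2 * INR K)).
    assert (Hcv : Un_cv (fun N => P (Z.of_nat K) N + P (- Z.of_nat K)%Z N - 2 * INR K * zpart mu N)
                        (U (Z.of_nat K) + U (- Z.of_nat K)%Z - 2 * INR K * 1)).
    { apply CV_minus; [apply CV_plus; auto|apply CV_mult; [apply cv_const|auto]]. }
    assert (Hq : forall N, P (Z.of_nat K) N + P (- Z.of_nat K)%Z N - 2 * INR K * zpart mu N <= eps).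
    { intros N. unfold P. rewrite <- zpart_scal, <- zpart_plus, <- zpart_minus.
      set (q := fun y => if Z_le_dec (Z.abs y) (Z.of_nat K) then 0 else Rabs (IZR y) * mu y).
      apply Rle_trans with (2 * zpart q N).
      { rewrite <- zpart_scal. apply zpart_le. intros y _.
        rewrite opp_IZR, <- INR_IZR_INZ.
        replace (IZR y - - INR K) with (IZR y + INR K) by ring.
        unfold q. destruct Z_le_dec.
          replace (mu y * Rabs (IZR y - INR K) + mu y * Rabs (IZR y + INR K) - 2 * INR K * mu y)
            with (mu y * (Rabs (IZR y - INR K) + Rabs (IZR y + INR K) - 2 * INR K)) by ring.
          rewrite abs_small; [lra|]. rewrite <- abs_IZR, INR_IZR_INZ. apply IZR_le; lia.
        - pose proof (abs_split (IZR y) (INR K) HK0). pose proof (Hmu y). nra. }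
      assert (Hqn : forall y, 0 <= q y) by (intros; unfold q; destruct Z_le_dec; [lra|auto]).
      apply Rle_trans with (2 * zpart q (Nat.max N K)).
      { apply Rmult_le_compat_l; [lra|]. apply zpart_mono; auto; lia. }
      assert (E : zpart q (Nat.max N K) = zpart (fun y => Rabs (IZR y) * mu y) (Nat.max N K)
                    - zpart (fun y => Rabs (IZR y) * mu y) K).
      { set (q2 := fun y => if Z_le_dec (Z.abs y) (Z.of_nat K) then Rabs (IZR y) * mu y else 0).
        assert (E1 : zpart q2 (Nat.max N K) = zpart (fun y => Rabs (IZR y) * mu y) K).
        { rewrite (zpart_support q2 K); [|intros y Hy; unfold q2; destruct Z_le_dec; [lia|auto]|lia].
          apply zpart_ext; intros y Hy; unfold q2; destruct Z_le_dec; [auto|lia]. }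
        rewrite <- E1, <- zpart_minus. apply zpart_ext; intros y _; unfold q, q2; destruct Z_le_dec; ring. }
      rewrite E. pose proof (Hmle (Nat.max N K)).
      pose proof (HK K ltac:(lia)) as HKK. unfold R_dist in HKK. apply Rabs_def2 in HKK. lra. }
    pose proof (Rle_cv_lim (Vn := fun _ => eps) Hq Hcv (cv_const eps)) as Hf. lra.
Qed.
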